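(* Let $p\ge1$ and let $\mathcal A=(A_n)_{n\ge0}$ be a sequence of positive invertible $p\times p$ matrices with $\sup_n\|A_n\|<\infty$ such that the matrix-valued weighted shift $W_{\mathcal A}$ on $\ell^2(\mathbb C^p)$ is quadratically hyponormal. If $A_n=A_{n+1}$ for some $n\ge1$, then $W_{\mathcal A}$ is flat, i.e. $A_k=A_1$ for every $k\ge1$.
   Context: $\ell^2(\mathbb C^p)=\{(x_n)_{n\ge0}: x_n\in\mathbb C^p,\ \sum_n\|x_n\|^2<\infty\}$; the matrix-valued weighted shift is $W_{\mathcal A}(x_0,x_1,\dots)=(0,A_0x_0,A_1x_1,\dots)$. A bounded operator $T$ is hyponormal if $T^*T-TT^*\ge0$, and quadratically hyponormal if $T+\lambda T^2$ is hyponormal for every $\lambda\in\mathbb C$. The shift is flat if $A_k=A_1$ for all $k\ge1$. *)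

(* Defs.v *)
From HB Require Import structures.
From mathcomp Require Import all_boot all_order all_algebra.
From mathcomp Require Import all_classical all_reals all_analysis.
From mathcomp Require Import complex.
Set Implicit Arguments. Unset Strict Implicit. Unset Printing Implicit Defensive.
Import Order.TTheory GRing.Theory Num.Theory.
Local Open Scope ring_scope.

Section Defs.
Variables (R : realType) (p : nat).
Local Notation C := (R[i]).

Definition adjmx m n (M : 'M[C]_(m, n)) : 'M[C]_(n, m) := (map_mx Num.conj M)^T.

Definition vnorm2 (v : 'cV[C]_p) : R :=
  \sum_(i < p) ((complex.Re (v i 0)) ^+ 2 + (complex.Im (v i 0)) ^+ 2).

Definition vseq := nat -> 'cV[C]_p.

Definition l2norm2 (x : vseq) : \bar R :=
  (\sum_(0 <= n <oo) ((vnorm2 (x n))%:E))%E.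

Definition in_l2 (x : vseq) : Prop := (l2norm2 x < +oo)%E.

Definition positive_mx (M : 'M[C]_p) : Prop :=
  adjmx M = M /\ forall v : 'cV[C]_p, 0 <= (adjmx v *m M *m v) 0 0.

Definition positive_invertible (M : 'M[C]_p) : Prop :=
  positive_mx M /\ M \in unitmx.

(* sup_n ||A_n|| < oo  (operator norms) *)
Definition bounded_weights (A : nat -> 'M[C]_p) : Prop :=
  exists M : R, forall n (v : 'cV[C]_p), vnorm2 (A n *m v) <= M ^+ 2 * vnorm2 v.

Definition wshift (A : nat -> 'M[C]_p) (x : vseq) : vseq :=
  fun n => if n is k.+1 then A k *m x k else 0.

Definition wshift_adj (A : nat -> 'M[C]_p) (x : vseq) : vseq :=
  fun n => adjmx (A n) *m x n.+1.

(* T (with adjoint Tadj) is hyponormal: <(T^* T - T T^* ) x, x> >= 0 on l^2,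
   i.e. ||T^* x||^2 <= ||T x||^2 for all x in l^2 *)
Definition hyponormal (T Tadj : vseq -> vseq) : Prop :=
  forall x : vseq, in_l2 x -> (l2norm2 (Tadj x) <= l2norm2 (T x))%E.

Definition quad_op (T : vseq -> vseq) (lam : C) (x : vseq) : vseq :=
  fun n => T x n + lam *: T (T x) n.

Definition quadratically_hyponormal (A : nat -> 'M[C]_p) : Prop :=
  forall lam : C,
    hyponormal (quad_op (wshift A) lam) (quad_op (wshift_adj A) (Num.conj lam)).

Definition flat (A : nat -> 'M[C]_p) : Prop :=
  forall k, (1 <= k)%N -> A k = A 1%N.

End Defs.

(* Main.v *)
Require Import Defs.
From HB Require Import structures.
From mathcomp Require Import all_boot all_order all_algebra.
From mathcomp Require Import all_classical all_reals all_analysis.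
From mathcomp Require Import complex.
From mathcomp Require Import ring lra zify.
Import Order.TTheory GRing.Theory Num.Theory.
Local Open Scope ring_scope.
Local Open Scope complex_scope.

Section S.
Variables (R : realType) (p : nat).
Local Notation C := (R[i]).
Local Notation V := 'cV[C]_p.

Lemma conjE (z : C) : Num.conj z = conjc z.
Proof. reflexivity. Qed.

Lemma ReM (z : C) : complex.Re (conjc z * z) = (complex.Re z)^+2 + (complex.Im z)^+2.
Proof. case: z => a b /=. change (a*a - (-b)*b = a^+2 + b^+2). ring. Qed.

Lemma ReJM (z w : C) : complex.Re (conjc z * w) = complex.Re (conjc w * z).
Proof. case: z => a b; case: w => c d /=. change (a*c - (-b)*d = c*a - (-d)*b). ring. Qed.

Lemma ReZ (s : R) (z : C) : complex.Re (s%:C * z) = s * complex.Re z.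
Proof. case: z => a b /=. change (s*a - 0*b = s*a). ring. Qed.

Lemma conjR (s : R) : conjc (s%:C) = s%:C.
Proof. exact: conjc_real. Qed.

Definition cip (u v : V) : C := \sum_i conjc (u i 0) * v i 0.
Definition ipr (u v : V) : R := complex.Re (cip u v).

Lemma ReSum (I : Type) (r : seq I) (P : pred I) (F : I -> C) :
  complex.Re (\sum_(i <- r | P i) F i) = \sum_(i <- r | P i) complex.Re (F i).
Proof. by rewrite raddf_sum. Qed.

Lemma vnorm2E (u : V) : vnorm2 u = ipr u u.
Proof. rewrite /vnorm2 /ipr /cip ReSum; apply: eq_bigr => i _; by rewrite ReM. Qed.

Lemma cipDl (u v w : V) : cip (u + v) w = cip u w + cip v w.
Proof. rewrite /cip -big_split /=; apply: eq_bigr => i _; by rewrite !mxE rmorphD mulrDl. Qed.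

Lemma cipDr (u v w : V) : cip u (v + w) = cip u v + cip u w.
Proof. rewrite /cip -big_split /=; apply: eq_bigr => i _; by rewrite !mxE mulrDr. Qed.

Lemma cipZl (c : C) (u w : V) : cip (c *: u) w = conjc c * cip u w.
Proof. rewrite /cip mulr_sumr; apply: eq_bigr => i _; by rewrite !mxE rmorphM mulrA. Qed.

Lemma cipZr (c : C) (u w : V) : cip u (c *: w) = c * cip u w.
Proof. rewrite /cip mulr_sumr; apply: eq_bigr => i _; rewrite !mxE; ring. Qed.

Lemma cipC (u v : V) : cip v u = conjc (cip u v).
Proof. rewrite /cip rmorph_sum; apply: eq_bigr => i _; rewrite rmorphM /= mulrC; congr (_ * _); case: (u i 0) => a b; by rewrite /= opprK. Qed.

Lemma cip_adj (M : 'M[C]_p) (u v : V) : cip (M *m u) v = cip u (adjmx M *m v).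
Proof.
rewrite /cip /adjmx.
under eq_bigr do rewrite !mxE rmorph_sum mulr_suml.
rewrite exchange_big /=; apply: eq_bigr => j _.
rewrite !mxE mulr_sumr; apply: eq_bigr => i _; rewrite !mxE rmorphM.
rewrite /=. ring.
Qed.
Lemma ReJ (z : C) : complex.Re (conjc z) = complex.Re z.
Proof. by case: z. Qed.

Lemma ipr_sym (u v : V) : ipr u v = ipr v u.
Proof. by rewrite /ipr [cip u v]cipC ReJ. Qed.

Lemma iprDl (u v w : V) : ipr (u + v) w = ipr u w + ipr v w.
Proof. by rewrite /ipr cipDl raddfD. Qed.

Lemma iprDr (u v w : V) : ipr u (v + w) = ipr u v + ipr u w.
Proof. by rewrite /ipr cipDr raddfD. Qed.

Lemma iprZl (s : R) (u w : V) : ipr (s%:C *: u) w = s * ipr u w.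
Proof. by rewrite /ipr cipZl conjR ReZ. Qed.

Lemma iprZr (s : R) (u w : V) : ipr u (s%:C *: w) = s * ipr u w.
Proof. by rewrite /ipr cipZr ReZ. Qed.

Lemma ipr_herm (M : 'M[C]_p) (u v : V) : adjmx M = M -> ipr (M *m u) v = ipr u (M *m v).
Proof. by move=> hM; rewrite /ipr cip_adj hM. Qed.

Lemma n2D (u v : V) : vnorm2 (u + v) = vnorm2 u + vnorm2 v + 2 * ipr u v.
Proof. rewrite !vnorm2E iprDl !iprDr [ipr v u]ipr_sym; ring. Qed.

Lemma n2Z (s : R) (u : V) : vnorm2 (s%:C *: u) = s ^+ 2 * vnorm2 u.
Proof. rewrite !vnorm2E iprZl iprZr; ring. Qed.

Lemma n2_ge0 (u : V) : 0 <= vnorm2 u.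
Proof. rewrite /vnorm2; apply: sumr_ge0 => i _; apply: addr_ge0; exact: sqr_ge0. Qed.

Lemma n2_eq0 (u : V) : vnorm2 u = 0 -> u = 0.
Proof.
move=> /eqP; rewrite /vnorm2 psumr_eq0; last by move=> i _; apply: addr_ge0; exact: sqr_ge0.
move=> /allP H; apply/matrixP => i j; rewrite (ord1 j) mxE.
have /H := mem_index_enum i; rewrite implyTb paddr_eq0 ?sqr_ge0 // !sqrf_eq0.
case/andP => /eqP ha /eqP hb; move: (u i 0) ha hb => [a b] /= -> ->; by [].
Qed.

Lemma n20 : vnorm2 (0 : V) = 0.
Proof. by rewrite /vnorm2 big1 // => i _; rewrite mxE /= expr0n /= addr0. Qed.

Lemma l2_fin (x : vseq R p) N : (forall k, (N <= k)%N -> x k = 0) ->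
  l2norm2 x = (\sum_(k < N) vnorm2 (x k))%:E.
Proof.
move=> hx; rewrite /l2norm2 (@nneseries_split _ _ 0 N); last by move=> k _; rewrite lee_fin n2_ge0.
rewrite add0n eseries0 ?adde0; last by move=> i hi _; rewrite hx // n20.
by rewrite sumEFin big_mkord.
Qed.

Lemma l2_ge (x : vseq R p) N : ((\sum_(k < N) vnorm2 (x k))%:E <= l2norm2 x)%E.
Proof.
have -> : (\sum_(k < N) vnorm2 (x k))%:E = (\sum_(0 <= k < N) (vnorm2 (x k))%:E)%E.
  by rewrite sumEFin big_mkord.
rewrite /l2norm2.
by apply: nneseries_lim_ge => k _ _; rewrite lee_fin n2_ge0.
Qed.

Lemma qfE (A : 'M[C]_p) (v : V) : (adjmx v *m A *m v) 0 0 = cip v (A *m v).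
Proof.
rewrite -mulmxA mxE /cip; apply: eq_bigr => k _; by rewrite /adjmx !mxE.
Qed.

Lemma psd_ipr (A : 'M[C]_p) (v : V) : positive_mx A -> 0 <= ipr v (A *m v).
Proof.
case=> _ /(_ v); rewrite qfE lecE => /andP[_]; by rewrite /ipr.
Qed.

Lemma psd_zero (A : 'M[C]_p) (v : V) : positive_mx A -> ipr v (A *m v) = 0 -> A *m v = 0.
Proof.
move=> hA h0.
have key : forall w : V, ipr w (A *m v) = 0.
  move=> w; set c := ipr w (A *m v); set b := ipr w (A *m w).
  have hb : 0 <= b by exact: psd_ipr A w hA.
  have := psd_ipr A (v + (- c / (b + 1))%:C *: w) hA.
  rewrite mulmxDr -scalemxAr iprDl !iprDr !iprZl !iprZr h0.
  rewrite -(ipr_herm A v w hA.1) [ipr (A *m v) w]ipr_sym -/b -/c.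
  set t := - c / (b + 1) => H.
  have hb1 : 0 < b + 1 by lra.
  have ht : t * (b + 1) = - c by rewrite /t divfK //; apply: lt0r_neq0.
  have e1 : t * c = - (t * t) * (b + 1) by rewrite -[c]opprK -ht; ring.
  have e2 : t * t * (b + 2) <= 0 by nra.
  have e3 : t * t <= 0 by nra.
  have e4 : t = 0 by nra.
  by rewrite -[c]opprK -ht e4 mul0r oppr0.
apply: n2_eq0; rewrite vnorm2E; exact: key.
Qed.

Lemma adjmxB (M N : 'M[C]_p) : adjmx (M - N) = adjmx M - adjmx N.
Proof. apply/matrixP => i j; by rewrite /adjmx !mxE rmorphB. Qed.

Lemma tr_herm (M X : 'M[C]_p) : adjmx M = M ->
  \tr (M *m X *m M) = \sum_j cip (col j M) (X *m col j M).
Proof.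
move=> hM; rewrite /mxtrace; apply: eq_bigr => j _.
rewrite -mulmxA mxE /cip; apply: eq_bigr => k _.
have cM : X *m col j M = col j (X *m M) by rewrite !colE mulmxA.
rewrite cM !mxE.
have := congr1 (fun N : 'M[C]_p => N j k) hM; rewrite /adjmx !mxE => <-.
by [].
Qed.

Lemma mx_ext (M N : 'M[C]_p) : (forall v : V, M *m v = N *m v) -> M = N.
Proof.
move=> h; apply/matrixP => i j.
have := congr1 (fun w : V => w i 0) (h (delta_mx j 0)).
by rewrite -!colE !mxE.
Qed.

Lemma sqrt_uniq (A B : 'M[C]_p) : positive_mx A -> positive_mx B -> A \in unitmx ->
  A *m A = B *m B -> A = B.
Proof.
move=> hA hB uA hAB.
set M := A - B.
have hM : adjmx M = M by rewrite /M adjmxB hA.1 hB.1.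
have e1 : A *m M = - (M *m B).
  by rewrite /M mulmxBr mulmxBl hAB opprB.
have e2 : \tr (M *m A *m M) + \tr (M *m B *m M) = 0.
  rewrite -mulmxA e1 mulmxN raddfN mulmxA /=.
  by rewrite -[M *m M *m B]mulmxA (mxtrace_mulC M (M *m B)) addNr.
rewrite !tr_herm // -big_split /= in e2.
have e3 := congr1 (@complex.Re R) e2.
rewrite ReSum /= in e3.
have e4 : forall j, ipr (col j M) (A *m col j M) = 0.
  move=> j; move/eqP: e3; rewrite psumr_eq0; last first.
    by move=> i _; rewrite raddfD /= addr_ge0 //; apply: psd_ipr.
  move/allP/(_ j (mem_index_enum j)); rewrite implyTb raddfD /=.
  rewrite paddr_eq0 ?psd_ipr //; by case/andP => /eqP.
have e5 : M = 0.
  apply/matrixP => i j.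
  have h1 := psd_zero A (col j M) hA (e4 j).
  have h2 : col j M = 0 by rewrite -[col j M]mul1mx -(mulVmx uA) -mulmxA h1 mulmx0.
  have := congr1 (fun w : V => w i 0) h2; by rewrite !mxE.
by apply/eqP; rewrite -subr_eq0; apply/eqP.
Qed.
End S.

Arguments ipr {R p}.
Arguments cip {R p}.

Lemma sum_lo (R : realType) (f : nat -> R) m : (forall k, 0 <= f k) ->
  (if m is m'.+1 then f m' else 0) <= \sum_(k < m.+1) f k.
Proof.
move=> f0; case: m => [|m'].
  by rewrite sumr_ge0.
rewrite big_ord_recr /= big_ord_recr /= -addrA ler_wpDl ?sumr_ge0 //.
by rewrite lerDl.
Qed.

Lemma sum_split7 (R : realType) (f : nat -> R) m : (forall k, (k <= m)%N -> f k = 0) ->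
  f m.+4 = 0 -> f m.+4.+1 = 0 ->
  \sum_(k < m.+4.+3) f k = f m.+1 + f m.+2 + f m.+3 + f m.+4.+2.
Proof.
move=> f0 f4 f5; rewrite !big_ord_recr /= big1 ?add0r.
  by rewrite (f0 m) // f4 f5 add0r !addr0.
move=> i _; apply: f0; exact: ltnW (ltn_ord i).
Qed.

Lemma sum_split4 (R : realType) (f : nat -> R) m :
  \sum_(k < m.+4) f k = \sum_(k < m.+1) f k + f m.+1 + f m.+2 + f m.+3.
Proof. by rewrite !big_ord_recr /=. Qed.

Lemma alg_key (R : realType) (p : nat) (s W : R) (e1 e2 e3 e4 q Aq z : 'cV[R[i]]_p) :
  ipr e2 e4 = vnorm2 e3 -> ipr e2 Aq = ipr e3 q ->
  s ^+ 4 * W + vnorm2 (e1 + (- s ^+ 2)%:C *: e3) + vnorm2 ((- s)%:C *: e2 + (s ^+ 3)%:C *: Aq)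
    + vnorm2 ((s ^+ 2)%:C *: q)
  <= vnorm2 ((s ^+ 2)%:C *: e3) + vnorm2 ((- s)%:C *: e2 + (s ^+ 3)%:C *: e4)
    + vnorm2 (e1 + (- s ^+ 2)%:C *: e3) + vnorm2 ((s ^+ 3)%:C *: z) ->
  s ^+ 4 * (vnorm2 (q + (-1)%:C *: e3) + W) <= s ^+ 6 * (vnorm2 e4 + vnorm2 z - vnorm2 Aq).
Proof.
move=> h1 h2 H.
rewrite !n2D !n2Z !iprZl !iprZr h1 h2 in H.
rewrite n2D n2Z iprZr ipr_sym.
have E : forall P Q X Y : R, Y - X = Q - P -> P <= Q -> X <= Y.
  by move=> P Q X Y e hPQ; rewrite -subr_ge0 e subr_ge0.
apply: (E _ _ _ _ _ H); ring.
Qed.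

Section Core.
Variables (R : realType) (p : nat) (A : nat -> 'M[R[i]]_p).
Local Notation C := (R[i]).
Local Notation V := 'cV[C]_p.
Hypothesis hpos : forall n, positive_invertible (A n).

Lemma hermA k : adjmx (A k) = A k.
Proof. by case: (hpos k) => [[]]. Qed.

Lemma ws0 (y : vseq R p) k : (forall j, (j < k)%N -> y j = 0) -> wshift A y k = 0.
Proof. case: k => [|j] h //=; by rewrite h // mulmx0. Qed.

Lemma wshi (y : vseq R p) N k : (forall j, (N <= j)%N -> y j = 0) -> (N < k)%N -> wshift A y k = 0.
Proof. case: k => [|j] h //= hk; by rewrite h // mulmx0. Qed.

Variables (m : nat) (s : R) (xi : V).
Hypothesis hn : A m.+1 = A m.+2.

Let An := A m.+1.
Let L := A m.
Let Rr := A m.+3.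
Let e1 := An *m xi.
Let e2 := An *m e1.
Let e3 := An *m e2.
Let e4 := An *m e3.
Let q := Rr *m (Rr *m e1).

Definition xs (j : nat) : V :=
  match j with
  | 0 => (s ^+ 2)%:C *: (invmx L *m e3)
  | 1 => (- s)%:C *: e1
  | 2 => xi
  | 3 => (- s)%:C *: e1
  | 4 => (s ^+ 2)%:C *: (Rr *m e1)
  | _ => 0
  end.

Definition xv (k : nat) : V := if (k < m)%N then 0 else xs (k - m).

Lemma xv_lo k : (k < m)%N -> xv k = 0.
Proof. by rewrite /xv => ->. Qed.
Lemma xv_hi k : (m + 5 <= k)%N -> xv k = 0.
Proof.
move=> hk; rewrite /xv ifF; last by apply/negbTE; rewrite -leqNgt; lia.
case E: (k - m)%N => [|[|[|[|[|j]]]]] //; lia.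
Qed.
Lemma xv0 : xv m = xs 0. Proof. by rewrite /xv ltnn subnn. Qed.
Lemma xvS j : xv (m + j.+1) = xs j.+1.
Proof. rewrite /xv ifF; last by apply/negbTE; rewrite -leqNgt; lia.
by rewrite (_ : (m + j.+1 - m)%N = j.+1) //; lia. Qed.

Lemma xv1 : xv m.+1 = xs 1. Proof. by rewrite -[m.+1]addn1 xvS. Qed.
Lemma xv2 : xv m.+2 = xs 2. Proof. by rewrite -[m.+2]addn2 xvS. Qed.
Lemma xv3 : xv m.+3 = xs 3. Proof. by rewrite -[m.+3]addn3 xvS. Qed.
Lemma xv4 : xv m.+4 = xs 4. Proof. by rewrite -[m.+4]addn4 xvS. Qed.
Lemma xv5 : xv m.+4.+1 = 0. Proof. by apply: xv_hi; lia. Qed.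
Lemma xv6 : xv m.+4.+2 = 0. Proof. by apply: xv_hi; lia. Qed.

Let lam : C := s%:C.
Let Tx := quad_op (wshift A) lam xv.
Let Ts := quad_op (wshift_adj A) (Num.conj lam) xv.

Lemma Lunit : L \in unitmx. Proof. by case: (hpos m). Qed.

Lemma wsm : wshift A xv m = 0.
Proof. apply: ws0 => j hj; exact: xv_lo. Qed.

Lemma T1 : Tx m.+1 = (s ^+ 2)%:C *: e3.
Proof.
rewrite /Tx /quad_op /= wsm mulmx0 scaler0 addr0 xv0 /=.
by rewrite -scalemxAr (mulKVmx Lunit).
Qed.

Lemma T2 : Tx m.+2 = (- s)%:C *: e2 + (s ^+ 3)%:C *: e4.
Proof.
rewrite /Tx /quad_op /= xv1 xv0 /=.
rewrite -!scalemxAr (mulKVmx Lunit) scalerA -rmorphM.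
by rewrite -exprS.
Qed.

Lemma T3 : Tx m.+3 = e1 + (- s ^+ 2)%:C *: e3.
Proof.
rewrite /Tx /quad_op /= xv2 xv1 /= -hn.
by rewrite -!scalemxAr scalerA -rmorphM mulrN -expr2.
Qed.

Lemma T4 : Tx m.+4 = 0.
Proof.
rewrite /Tx /quad_op /= xv3 xv2 /= -hn.
by rewrite -!scalemxAr rmorphN scaleNr addNr.
Qed.

Lemma T5 : Tx m.+4.+1 = 0.
Proof.
rewrite /Tx /quad_op /= xv4 xv3 /=.
by rewrite -!scalemxAr scalerA -rmorphM mulrN -expr2 rmorphN scaleNr addrN.
Qed.

Lemma T6 : Tx m.+4.+2 = (s ^+ 3)%:C *: (A m.+4.+1 *m (A m.+4 *m (Rr *m e1))).
Proof.
rewrite /Tx /quad_op /= xv5 xv4 /= mulmx0 add0r.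
by rewrite -!scalemxAr scalerA -rmorphM -exprS.
Qed.

Lemma Tlo k : (k <= m)%N -> Tx k = 0.
Proof.
move=> hk; rewrite /Tx /quad_op.
rewrite (ws0 xv k); last by move=> j hj; apply: xv_lo; lia.
rewrite (ws0 (wshift A xv) k); last first.
  move=> j hj; apply: ws0 => i hi; apply: xv_lo; lia.
by rewrite scaler0 addr0.
Qed.

Lemma Thi k : (m.+4.+2 < k)%N -> Tx k = 0.
Proof.
move=> hk; rewrite /Tx /quad_op.
have h1 : forall j, (m + 5 <= j)%N -> xv j = 0 by move=> j hj; exact: xv_hi.
have h2 : forall j, (m.+4.+2 <= j)%N -> wshift A xv j = 0.
  move=> j hj; apply: (@wshi xv (m + 5) j h1); lia.
rewrite (@wshi xv (m + 5) k h1); last by lia.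
by rewrite (@wshi _ (m.+4.+2) k h2) // scaler0 addr0.
Qed.

Lemma conjlam : Num.conj lam = lam.
Proof. exact: conjc_real. Qed.

Lemma S1 : Ts m.+1 = e1 + (- s ^+ 2)%:C *: e3.
Proof.
rewrite /Ts /quad_op /wshift_adj conjlam !hermA xv2 xv3 /= -hn.
by rewrite -!scalemxAr scalerA -rmorphM mulrN -expr2.
Qed.

Lemma S2 : Ts m.+2 = (- s)%:C *: e2 + (s ^+ 3)%:C *: (An *m q).
Proof.
rewrite /Ts /quad_op /wshift_adj conjlam !hermA xv3 xv4 /= -hn.
by rewrite -!scalemxAr scalerA -rmorphM -exprS.
Qed.

Lemma S3 : Ts m.+3 = (s ^+ 2)%:C *: q.
Proof.
rewrite /Ts /quad_op /wshift_adj conjlam !hermA xv4 xv5 /= mulmx0 mulmx0 scaler0 addr0.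
by rewrite -!scalemxAr.
Qed.

Lemma Sb m' : m = m'.+1 ->
  Ts m' = (s ^+ 2)%:C *: (A m' *m (invmx L *m e3)) + (- s ^+ 2)%:C *: (A m' *m (L *m e1)).
Proof.
move=> hm; rewrite /Ts /quad_op /wshift_adj conjlam !hermA -hm xv0 xv1 /=.
by rewrite -!scalemxAr scalerA -rmorphM mulrN -expr2.
Qed.

Hypothesis hq : quadratically_hyponormal A.

Lemma ineq0 : (if m is m'.+1 then vnorm2 (Ts m') else 0) + vnorm2 (Ts m.+1) + vnorm2 (Ts m.+2)
  + vnorm2 (Ts m.+3) <= vnorm2 (Tx m.+1) + vnorm2 (Tx m.+2) + vnorm2 (Tx m.+3) + vnorm2 (Tx m.+4.+2).
Proof.
have hl2 : in_l2 xv by rewrite /in_l2 (@l2_fin R p xv (m + 5) xv_hi) ltry.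
have H := hq lam xv hl2; rewrite -/Tx -/Ts in H.
rewrite (@l2_fin R p Tx m.+4.+3) in H; last by move=> k hk; apply: Thi; lia.
have H2 : ((\sum_(k < m.+4) vnorm2 (Ts k))%:E <= (\sum_(k < m.+4.+3) vnorm2 (Tx k))%:E)%E.
  by apply: le_trans H; exact: l2_ge.
rewrite lee_fin in H2.
rewrite (@sum_split7 R (fun k => vnorm2 (Tx k))) in H2; first last.
- by rewrite /= T5 n20.
- by rewrite /= T4 n20.
- by move=> k hk; rewrite /= Tlo ?n20.
rewrite (@sum_split4 R (fun k => vnorm2 (Ts k)) m) in H2.
apply: le_trans H2; do 3 apply: lerD => //.
exact: (@sum_lo R (fun k => vnorm2 (Ts k)) m (fun k => @n2_ge0 R p (Ts k))).
Qed.

Definition W0 : R := if m is m'.+1 then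
  vnorm2 (A m' *m (invmx L *m e3) + (-1)%:C *: (A m' *m (L *m e1))) else 0.
Definition Kc : R := vnorm2 (q + (-1)%:C *: e3) + W0.
Definition Dc : R := vnorm2 e4 + vnorm2 (A m.+4.+1 *m (A m.+4 *m (Rr *m e1))) - vnorm2 (An *m q).

Lemma Wt_eq : (if m is m'.+1 then vnorm2 (Ts m') else 0) = s ^+ 4 * W0.
Proof.
rewrite /W0; move E: m => mm; case: mm E => [|m'] E; first by rewrite mulr0.
rewrite (Sb _ E).
set w1 := A m' *m _; set w2 := A m' *m _.
have -> : (s ^+ 2)%:C *: w1 + (- s ^+ 2)%:C *: w2 = (s ^+ 2)%:C *: (w1 + (-1)%:C *: w2).
  by rewrite scalerDr scalerA -rmorphM mulrN1.
by rewrite n2Z -exprM.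
Qed.

Lemma key : s ^+ 4 * Kc <= s ^+ 6 * Dc.
Proof.
have H := ineq0; rewrite Wt_eq T1 T2 T3 T6 S1 S2 S3 in H.
have h1 : ipr e2 e4 = vnorm2 e3.
  by rewrite vnorm2E /e4 -(@ipr_herm R p An _ _ (hermA m.+1)).
have h2 : ipr e2 (An *m q) = ipr e3 q.
  by rewrite -(@ipr_herm R p An _ _ (hermA m.+1)).
rewrite /Kc /Dc; exact: (@alg_key R p s W0 _ _ _ _ _ _ _ h1 h2 H).
Qed.
End Core.

Lemma small_lem (R : realType) (K D : R) :
  (forall s : R, s != 0 -> s ^+ 4 * K <= s ^+ 6 * D) -> K <= 0.
Proof.
move=> h; rewrite leNgt; apply/negP => hK.
set a := `|D|.
have ha : 0 <= a by exact: normr_ge0.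
have hDa : D <= a by exact: ler_norm.
set u := K / (K + a + 1).
have hpos : 0 < K + a + 1 by lra.
have hu : u * (K + a + 1) = K by rewrite /u divfK //; apply: lt0r_neq0.
have u0 : 0 < u by rewrite /u divr_gt0.
have u1 : u < 1 by nra.
have := h u (lt0r_neq0 u0).
have e4 : 0 < u ^+ 4 by rewrite exprn_gt0.
rewrite (_ : u ^+ 6 = u ^+ 4 * (u * u)); last by rewrite -!expr2 -exprD.
move=> H.
have H2 : K <= u * u * D.
  rewrite -(ler_pM2l e4); lra.
have H3 : u * u * D <= u * u * a by apply: ler_wpM2l; nra.
have H4 : u * u * a <= u * a by nra.
nra.
Qed.

Lemma vec_eq (R : realType) (p : nat) (u w : 'cV[R[i]]_p) :
  vnorm2 (u + (-1)%:C *: w) = 0 -> u = w.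
Proof.
move/n2_eq0; rewrite rmorphN1 scaleN1r => /eqP; rewrite subr_eq0 => /eqP //.
Qed.

Lemma cancel_r (R : realType) (p : nat) (M N X : 'M[R[i]]_p) :
  X \in unitmx -> M *m X = N *m X -> M = N.
Proof. by move=> uX e; rewrite -(mulmxK uX M) e mulmxK. Qed.

Lemma step (R : realType) (p : nat) (A : nat -> 'M[R[i]]_p)
  (hpos : forall n, positive_invertible (A n)) (hq : quadratically_hyponormal A) m :
  A m.+1 = A m.+2 -> A m.+2 = A m.+3 /\ (forall m', m = m'.+1 -> A m = A m.+1).
Proof.
move=> hn.
have hK : forall xi, Kc R p A m xi <= 0.
  move=> xi; apply: (@small_lem R _ (Dc R p A m xi)) => s _.
  exact: (key R p A hpos m s xi hn hq).
have W0ge : forall xi, 0 <= W0 R p A m xi.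
  move=> xi; rewrite /W0; case: (m) => [|m'] //; exact: n2_ge0.
have hq1 : forall xi, vnorm2 (A m.+3 *m (A m.+3 *m (A m.+1 *m xi))
    + (-1)%:C *: (A m.+1 *m (A m.+1 *m (A m.+1 *m xi)))) = 0 /\ W0 R p A m xi = 0.
  move=> xi; have := hK xi; rewrite /Kc => h.
  have h1 := W0ge xi; have h2 := n2_ge0 R p (A m.+3 *m (A m.+3 *m (A m.+1 *m xi))
    + (-1)%:C *: (A m.+1 *m (A m.+1 *m (A m.+1 *m xi)))).
  split; lra.
have uA : forall k, A k \in unitmx by move=> k; case: (hpos k).
have pA : forall k, positive_mx (A k) by move=> k; case: (hpos k).
split.
  have e : A m.+3 *m A m.+3 *m A m.+1 = A m.+1 *m A m.+1 *m A m.+1.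
    apply: mx_ext => v; rewrite -!mulmxA; apply: vec_eq; exact: (hq1 v).1.
  have e2 := @cancel_r R p _ _ _ (uA m.+1) e.
  rewrite -hn; apply: sqrt_uniq; rewrite ?e2 //.
move=> m' hm.
have e : A m *m A m *m A m.+1 = A m.+1 *m A m.+1 *m A m.+1.
  apply: mx_ext => v; have := (hq1 v).2; rewrite /W0 hm -hm => h.
  have h3 := @vec_eq R p _ _ h.
  have h4 : invmx (A m) *m (A m.+1 *m (A m.+1 *m (A m.+1 *m v))) = A m *m (A m.+1 *m v).
    by have := congr1 (mulmx (invmx (A m'))) h3; rewrite !mulKmx.
  by rewrite -!mulmxA -h4 mulKVmx.
have e2 := @cancel_r R p _ _ _ (uA m.+1) e.
symmetry; apply: sqrt_uniq; rewrite ?e2 //.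
Qed.

Close Scope complex_scope.

Theorem mainTheorem7 (R : realType) (p : nat) (A : nat -> 'M[R[i]]_p) :
  (1 <= p)%N ->
  (forall n, positive_invertible (A n)) ->
  bounded_weights A ->
  quadratically_hyponormal A ->
  forall n, (1 <= n)%N -> A n = A n.+1 ->
  flat A.
Proof.
move=> _ hpos _ hq [//|m] _ hn.
have P : forall j, A (m + j).+1 = A (m + j).+2.
  elim=> [|j IH]; first by rewrite addn0.
  by rewrite addnS; exact: (step R p A hpos hq (m + j) IH).1.
have P' : forall j, (j <= m)%N -> A (m - j).+1 = A (m - j).+2.
  elim=> [|j IH] hj; first by rewrite subn0.
  have e : (m - j)%N = (m - j.+1).+1 by lia.
  have := (step R p A hpos hq (m - j) (IH (ltnW hj))).2 _ e.
  by rewrite e.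
have Cc : forall i, A i.+1 = A i.+2.
  move=> i; case: (leqP m i) => hi.
    by have := P (i - m)%N; rewrite subnKC.
  have := P' (m - i)%N (leq_subr _ _); rewrite subKn //; exact: ltnW.
move=> k hk; case: k hk => [//|k] _.
elim: k => [//|k IH]; by rewrite -Cc.
Qed.
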